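(* For all $W\in\mathcal{C}$ and all $\bar\varphi\in\mathbb{R}$ we have $\mathcal{L}\big(W(\cdot+\bar\varphi)\big)=\mathcal{L}(W)$.
   Context: Let $\Phi:\mathbb{R}\to\mathbb{R}$ be twice continuously differentiable on $[-1,1]$ with: $\Phi'(-1)=-1$, $\Phi'(1)=1$; $\Phi''\ge0$ on $[-1,1]$; $\Phi(-1)=\Phi(1)$; $\Phi''(-1)<1$, $\Phi''(1)<1$; and $g_\Phi(w):=\int_{-1}^w(v-\Phi'(v))\,dv>0$ for all $w\in(-1,1)$. $(\mathcal{A}U)(\varphi)=\int_{\varphi-1/2}^{\varphi+1/2}U(s)\,ds$; $W_{\rm sh}(\varphi)=\mathrm{sgn}(\varphi)$; $\mathcal{H}=\{W\text{ measurable}: W_{\rm sh}-W\in L^2(\mathbb{R})\}$; $\mathcal{L}(W)=\int_{\mathbb{R}}(\tfrac12W^2-\Phi(\mathcal{A}W))-(\tfrac12W_{\rm sh}^2-\Phi(\mathcal{A}W_{\rm sh}))\,d\varphi$. $\mathcal{C}$ is the set of $W\in\mathcal{H}$ that are a.e. equal to a nondecreasing function with $W(\varphi)\to\pm1$ as $\varphi\to\pm\infty$. *)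

(* Defs.v *)
From HB Require Import structures.
From mathcomp Require Import all_boot all_order all_algebra.
From mathcomp Require Import all_classical all_reals all_analysis.
Set Implicit Arguments. Unset Strict Implicit. Unset Printing Implicit Defensive.
Import Order.TTheory GRing.Theory Num.Theory.
Import numFieldNormedType.Exports.
Local Open Scope classical_set_scope.
Local Open Scope ring_scope.

Section Defs.
Variable R : realType.
Notation mu := (@lebesgue_measure R).

Definition I11 : set R := [set x | -1 <= x <= 1].

(* f' is the derivative of f on the set A, in the sense of difference quotients
   with y -> x, y in A, y <> x (one-sided at endpoints of an interval). *)
Definition deriv_on (f f' : R -> R) (A : set R) : Prop :=
  forall x, A x ->
    (fun y => (f y - f x) / (y - x)) @ within A x^' --> f' x.

Definition g_Phi (dPhi : R -> R) (w : R) : R :=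
  Rintegral mu [set v | -1 <= v <= w] (fun v => v - dPhi v).

Definition Aop (U : R -> R) (phi : R) : R :=
  Rintegral mu [set s | phi - 2^-1 <= s <= phi + 2^-1] U.

Definition Wsh (phi : R) : R := Num.sg phi.

Definition in_H (W : R -> R) : Prop :=
  measurable_fun setT W /\
  (\int[mu]_x ((Wsh x - W x) ^+ 2)%:E < +oo)%E.

Definition in_C (W : R -> R) : Prop :=
  in_H W /\
  exists V : R -> R,
    {ae mu, forall x, W x = V x} /\
    {homo V : x y / x <= y} /\
    (V x @[x --> +oo%R] --> (1 : R)) /\
    (V x @[x --> -oo%R] --> (-1 : R)).

Definition L_Phi (Phi : R -> R) (W : R -> R) : \bar R :=
  \int[mu]_phi
    (((2^-1 * W phi ^+ 2 - Phi (Aop W phi))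
      - (2^-1 * Wsh phi ^+ 2 - Phi (Aop Wsh phi))))%:E.

End Defs.

(* Main.v *)
Require Import Defs.
From HB Require Import structures.
From mathcomp Require Import all_boot all_order all_algebra.
From mathcomp Require Import all_classical all_reals all_analysis.
From mathcomp Require Import measurable_realfun.
From mathcomp.algebra_tactics Require Import ring lra.
Import Order.TTheory GRing.Theory Num.Theory.
Import numFieldNormedType.Exports.
Local Open Scope classical_set_scope.
Local Open Scope ring_scope.

Section gen.
Context d (T : measurableType d) (R : realType) (mu : {measure set T -> \bar R}).
Local Open Scope ereal_scope.

Lemma fin_add_oo (x y : \bar R) : y \is a fin_num -> +oo <= x + y -> x = +oo.
Proof. by case: x => [a| |]; case: y => [b| |] //=; rewrite leye_eq. Qed.

Lemma ereal_aux (Pw Nw Pu Nu Ak Ik : \bar R) :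
  0 <= Pw -> 0 <= Nw -> 0 <= Pu -> 0 <= Nu -> 0 <= Ak -> Ak < +oo ->
  Ik \is a fin_num ->
  Pu <= Pw + Ak -> Nu <= Nw + Ak -> Pw <= Pu + Ak -> Nw <= Nu + Ak ->
  (Pu < +oo -> Nu < +oo -> Pw - Nw = Pu - Nu + Ik) -> Pw - Nw = Pu - Nu + Ik.
Proof.
move=> Pw0 Nw0 Pu0 Nu0 Ak0 Akoo Ikf h1 h2 h3 h4 H.
have Akf : Ak \is a fin_num by rewrite ge0_fin_numE.
have [Nuoo|Nulto] := eqVneq Nu +oo.
  have Nwoo : Nw = +oo by apply: (@fin_add_oo Nw Ak Akf); rewrite -Nuoo.
  by rewrite Nwoo Nuoo /= !addeNy addNye.
have Nult : Nu < +oo by rewrite lt_neqAle Nulto leey.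
have [Puoo|Pulto] := eqVneq Pu +oo.
  have Pwoo : Pw = +oo by apply: (@fin_add_oo Pw Ak Akf); rewrite -Puoo.
  have Nwf : Nw \is a fin_num.
    rewrite ge0_fin_numE //; apply: (le_lt_trans h4); exact: lte_add_pinfty.
  have Nuf : Nu \is a fin_num by rewrite ge0_fin_numE.
  by rewrite Pwoo Puoo -(fineK Nwf) -(fineK Nuf) -(fineK Ikf).
apply: H => //; by rewrite lt_neqAle Pulto leey.
Qed.


Lemma maxle1 (a b : R) : (Num.max a 0 <= Num.max (a + b) 0 + `|b|)%R.
Proof.
rewrite ge_max; apply/andP; split; last by rewrite addr_ge0 // le_max lexx orbT.
have h1 : (a + b <= Num.max (a + b) 0)%R by rewrite le_max lexx.
have h2 : (- b <= `|b|)%R by rewrite -normrN ler_norm.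
have := lerD h1 h2; by rewrite addrK.
Qed.

Lemma maxle2 (a b : R) : (Num.max (a + b) 0 <= Num.max a 0 + `|b|)%R.
Proof.
have := maxle1 (a + b) (- b); by rewrite addrK normrN.
Qed.

Lemma int_le_add (f g h : T -> R) :
  measurable_fun setT f -> measurable_fun setT g -> measurable_fun setT h ->
  (forall x, 0 <= f x)%R -> (forall x, 0 <= g x)%R -> (forall x, 0 <= h x)%R ->
  (forall x, f x <= g x + h x)%R ->
  \int[mu]_x (f x)%:E <= \int[mu]_x (g x)%:E + \int[mu]_x (h x)%:E.
Proof.
move=> mf mg mh f0 g0 h0 fgh.
have E : \int[mu]_x ((g x)%:E + (h x)%:E) = \int[mu]_x (g x)%:E + \int[mu]_x (h x)%:E.
  apply: ge0_integralD => //.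
  - by move=> x _; rewrite lee_fin; auto.
  - by apply/measurable_EFinP.
  - by move=> x _; rewrite lee_fin; auto.
  - by apply/measurable_EFinP.
rewrite -E; apply: ge0_le_integral => //.
- by move=> x _; rewrite lee_fin; auto.
- exact/measurable_EFinP.
- apply: emeasurable_funD; exact/measurable_EFinP.
- by move=> x _; rewrite lee_fin fgh.
Qed.

Lemma integralD_gen (u k : T -> R) : measurable_fun setT u ->
  mu.-integrable setT (EFin \o k) ->
  \int[mu]_x ((u x + k x)%R)%:E = \int[mu]_x (u x)%:E + \int[mu]_x (k x)%:E.
Proof.
move=> mu_ ik.
have mk : measurable_fun setT k by apply/measurable_EFinP; exact: measurable_int ik.
have mw : measurable_fun setT (fun x => u x + k x)%R by exact: measurable_funD.
have mak : measurable_fun setT (fun x => `|k x|)%R by exact: measurableT_comp.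
have Akoo : \int[mu]_x (`|k x|%R)%:E < +oo by case/integrableP: ik.
have Ikf : \int[mu]_x (k x)%:E \is a fin_num by exact: (integrable_fin_num measurableT ik).
have key : \int[mu]_x (u x)%:E = \int[mu]_x ((u^\+ x)%R)%:E - \int[mu]_x ((u^\- x)%R)%:E.
  by rewrite integralE funerpos funerneg.
have keyw : \int[mu]_x ((u x + k x)%R)%:E =
  \int[mu]_x (((fun x => u x + k x)%R^\+ x)%R)%:E -
  \int[mu]_x (((fun x => u x + k x)%R^\- x)%R)%:E.
  by rewrite integralE funerpos funerneg.
have mup := measurable_funrpos mu_.
have mun := measurable_funrneg mu_.
have mwp := measurable_funrpos mw.
have mwn := measurable_funrneg mw.
have H : \int[mu]_x ((u^\+ x)%R)%:E < +oo -> \int[mu]_x ((u^\- x)%R)%:E < +oo ->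
    \int[mu]_x ((u x + k x)%R)%:E = \int[mu]_x (u x)%:E + \int[mu]_x (k x)%:E.
  move=> hp hn.
  have iu : mu.-integrable setT (EFin \o u).
    apply/integrableP; split; first exact/measurable_EFinP.
    rewrite (_ : (fun x => `|(EFin \o u) x|) = (fun x => (u^\+ x)%:E + (u^\- x)%:E)).
      rewrite ge0_integralD //; first exact: lte_add_pinfty.
      - by move=> x _; rewrite lee_fin funrpos_ge0.
      - exact/measurable_EFinP.
      - by move=> x _; rewrite lee_fin funrneg_ge0.
      - exact/measurable_EFinP.
    apply/funext => x /=; rewrite -EFinD; congr (_%:E).
    rewrite /funrpos /funrneg; case: (lerP 0 (u x)) => h.
      by rewrite ger0_norm // (max_r (_ : - u x <= 0)%R) ?oppr_le0 // addr0.
    by rewrite ltr0_norm // (max_l (_ : 0 <= - u x)%R) ?oppr_ge0 ?ltW // add0r.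
  exact: (integralD measurableT iu ik).
rewrite keyw key.
apply: (@ereal_aux _ _ _ _ (\int[mu]_x (`|k x|%R)%:E)).
- apply: integral_ge0 => x _; rewrite lee_fin funrpos_ge0.
all: try done.
all: try (by apply: integral_ge0 => x _; rewrite lee_fin ?funrpos_ge0 ?funrneg_ge0).
- apply: int_le_add => // x; rewrite ?funrpos_ge0 ?funrneg_ge0 //.
  exact: maxle1.
- apply: int_le_add => // x; rewrite ?funrpos_ge0 ?funrneg_ge0 //.
  rewrite /funrneg -(normrN (k x)); have := maxle1 (- u x) (- k x); by rewrite opprD.
- apply: int_le_add => // x; rewrite ?funrpos_ge0 ?funrneg_ge0 //.
  exact: maxle2.
- apply: int_le_add => // x; rewrite ?funrpos_ge0 ?funrneg_ge0 //.
  rewrite /funrneg -(normrN (k x)); have := maxle2 (- u x) (- k x); by rewrite opprD.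
- by move=> hp hn; rewrite -keyw -key; exact: H.
Qed.
End gen.

Section S.
Variable R : realType.
Local Notation mu := (@lebesgue_measure R).

Lemma mshift (a : R) : measurable_fun setT (fun x : R => x + a).
Proof. by apply: measurable_funD => //; exact: measurable_cst. Qed.

Definition shmu (a : R) (A : set (measurableTypeR R)) := mu ((fun x => x + a) @^-1` A).

Section shmu_measure.
Variable a : R.
Let f := (fun x : R => x + a).
Let shmu0 : shmu a set0 = 0%E.
Proof. by rewrite /shmu preimage_set0 measure0. Qed.
Let shmu_ge0 A : (0 <= shmu a A)%E.
Proof. exact: measure_ge0. Qed.
Let shmu_sigma_additive : semi_sigma_additive (shmu a).
Proof.
move=> F mF tF mUF; rewrite /shmu preimage_bigcup.
apply: measure_semi_sigma_additive.
- move=> n; have mFn : @measurable _ R (F n) := mF n.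
  have := mshift a measurableT _ mFn; rewrite setTI; exact.
- apply/trivIsetP => /= i j _ _ ij; rewrite -preimage_setI.
  by move/trivIsetP : tF => /(_ _ _ _ _ ij) ->//; rewrite preimage_set0.
- have mU : @measurable _ R (\bigcup_n F n) := mUF.
  have := mshift a measurableT _ mU; rewrite setTI preimage_bigcup; exact.
Qed.
HB.instance Definition _ := isMeasure.Build _ _ _
  (shmu a) shmu0 shmu_ge0 shmu_sigma_additive.
End shmu_measure.

Lemma shift_measure (a : R) (A : set R) : measurable A ->
  shmu a A = mu A.
Proof.
move=> mA; apply/esym/lebesgue_measure_unique => //=.
move=> _ [[x y] _ <-]; rewrite /shmu.
have -> : (fun z => z + a) @^-1` `]x, y]%classic = `]x - a, y - a]%classic.
  apply/seteqP; split => z /=; rewrite !in_itv /= ?lerBrDr ?ltrBlDr //.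
rewrite !lebesgue_measure_itv /= !lte_fin ltrD2r.
by case: ifP => // _; congr (_%:E); rewrite opprB addrA subrK addrC. 
Qed.

Local Notation RR := (measurableTypeR R).
Lemma mshiftR (a : R) : measurable_fun (setT : set RR) ((fun x : R => x + a) : RR -> RR).
Proof. exact: (mshift a). Qed.
Local Open Scope ereal_scope.
Lemma ge0_integral_shift (a : R) (f : RR -> \bar R) :
  measurable_fun setT f -> (forall x, 0 <= f x) ->
  \int[mu]_x f (x + a)%R = \int[mu]_x f x.
Proof.
move=> mf f0.
have := @ge0_integral_pushforward _ _ RR RR R (fun x : R => x + a)%R (mshiftR a) mu setT f
  measurableT mf (fun y _ => f0 y).
rewrite preimage_setT => <-.
change (\int[shmu a]_y f y = \int[mu]_x f x).
apply: eq_measure_integral => A mA _.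
by have := shift_measure a A mA.
Qed.

Lemma integral_shift (a : R) (f : RR -> \bar R) :
  measurable_fun setT f ->
  \int[mu]_x f (x + a)%R = \int[mu]_x f x.
Proof.
move=> mf; rewrite integralE [RHS]integralE.
have h1 := @ge0_integral_shift a f^\+ (measurable_funepos mf) (fun x => funepos_ge0 f x).
have h2 := @ge0_integral_shift a f^\- (measurable_funeneg mf) (fun x => funeneg_ge0 f x).
rewrite -h1 -h2; congr (_ - _); apply: eq_integral => x _.
  exact: (congr1 (fun g => g x) (funepos_comp f (fun x0 : R => x0 + a)%R)).
exact: (congr1 (fun g => g x) (funeneg_comp f (fun x0 : R => x0 + a)%R)).
Qed.

Local Close Scope ereal_scope.
Lemma mitv (x y : R) : measurable [set s : R | x <= s <= y].
Proof. by rewrite -set_itvcc; exact: measurable_itv. Qed.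

Lemma Aop_shift (U : R -> R) (a phi : R) : measurable_fun setT U ->
  Aop (fun s => U (s + a)) phi = Aop U (phi + a).
Proof.
move=> mU; rewrite /Aop /Rintegral; congr fine.
set D := [set s | phi - 2^-1 <= s <= phi + 2^-1].
set D' := [set s | phi + a - 2^-1 <= s <= phi + a + 2^-1].
rewrite integral_mkcond [RHS]integral_mkcond.
have mh : measurable_fun (setT : set RR) ((fun x => (U x)%:E) \_ D').
  apply/(measurable_restrictT _ (mitv _ _)).
  apply/measurable_EFinP; exact: measurable_funS mU.
rewrite -(@integral_shift a ((fun x => (U x)%:E) \_ D') mh).
apply: eq_integral => x _.
rewrite !patchE /D /D'; congr (if _ then _ else _).
by apply/idP/idP => /set_mem /= h; apply/mem_set => /=; move: h;
  rewrite /= (addrAC phi a (- 2^-1)) (addrAC phi a 2^-1) !lerD2r.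
Qed.

Definition Dm (phi : R) := [set s : R | phi - 2^-1 <= s <= phi + 2^-1].

Lemma mDm (phi : R) : @measurable _ RR (Dm phi).
Proof. exact: mitv. Qed.

Lemma muD (phi : R) : mu (Dm phi) = 1%:E.
Proof.
rewrite /Dm -set_itvcc lebesgue_measure_itv /= lte_fin.
have -> : phi - 2^-1 < phi + 2^-1 by lra.
by congr (_%:E); field.
Qed.

Lemma int_cstD (phi r : R) : (\int[mu]_(x in Dm phi) r%:E = r%:E)%E.
Proof.
have := @integral_cst _ RR R mu (Dm phi) (mitv _ _) r%:E.
move=> ->; transitivity (r%:E * 1%:E)%E; last by rewrite mule1.
by congr (_ * _)%E; exact: muD.
Qed.

Lemma integrable_bd (U : R -> R) (phi : R) : measurable_fun setT U ->
  (forall x, `|U x| <= 1) -> mu.-integrable (Dm phi) (EFin \o U).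
Proof.
move=> mU hU; apply/integrableP; split.
  apply/measurable_EFinP; exact: measurable_funS mU.
apply: (@le_lt_trans _ _ (\int[mu]_(x in Dm phi) 1%:E))%E; last by rewrite int_cstD ltry.
apply: ge0_le_integral => //.
- exact: mitv.
- apply/measurable_EFinP; apply: measurableT_comp => //; exact: measurable_funS mU.
- by move=> x _; rewrite /= lee_fin hU.
Qed.

Lemma bd_norm (U : R -> R) : (forall x, -1 <= U x <= 1) -> forall x, `|U x| <= 1.
Proof. by move=> hU x; rewrite ler_norml hU. Qed.

Lemma Aop_bound (U : R -> R) (phi : R) : measurable_fun setT U ->
  (forall x, -1 <= U x <= 1) -> -1 <= Aop U phi <= 1.
Proof.
move=> mU hU.
change (-1 <= fine (\int[mu]_(x in Dm phi) (U x)%:E) <= 1).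
have iU := @integrable_bd U phi mU (@bd_norm U hU).
have fI : (\int[mu]_(x in Dm phi) (U x)%:E)%E \is a fin_num by exact: (integrable_fin_num (mDm phi) iU).
have i1 : mu.-integrable (Dm phi) (EFin \o (fun _ => 1 : R)).
  by apply: integrable_bd => // _; rewrite normr1.
have in1 : mu.-integrable (Dm phi) (EFin \o (fun _ => -1 : R)).
  by apply: integrable_bd => // _; rewrite normrN normr1.
have h1 : (\int[mu]_(x in Dm phi) (U x)%:E <= 1%:E)%E.
  rewrite -[X in (_ <= X)%E](int_cstD phi 1).
  apply: (le_integral (mDm phi) iU i1) => x /set_mem /= _.
  by rewrite lee_fin; case/andP: (hU x).
have h2 : ((-1)%:E <= \int[mu]_(x in Dm phi) (U x)%:E)%E.
  rewrite -[X in (X <= _)%E](int_cstD phi (-1)).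
  apply: (le_integral (mDm phi) in1 iU) => x /set_mem /= _.
  by rewrite lee_fin; case/andP: (hU x).
by rewrite -!lee_fin fineK // h1 h2.
Qed.

Lemma V_bounds (V : R -> R) : {homo V : x y / x <= y} ->
  V x @[x --> +oo] --> (1 : R) -> V x @[x --> -oo] --> (-1 : R) ->
  forall x, -1 <= V x <= 1.
Proof.
move=> ndV cp cn x; apply/andP; split.
  apply: (cvgr_to_le cn); exists x; split; first exact: num_real.
  by move=> y /ltW /ndV.
apply: (cvgr_to_ge cp); exists x; split; first exact: num_real.
by move=> y /ltW /ndV.
Qed.

Lemma Aop_nd (V : R -> R) : {homo V : x y / x <= y} ->
  (forall x, -1 <= V x <= 1) -> {homo Aop V : x y / x <= y}.
Proof.
move=> ndV hV p q pq.
have mV : measurable_fun setT V by apply: nondecreasing_measurable.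
have -> : q = p + (q - p) by rewrite addrC subrK.
rewrite -Aop_shift //.
change (fine (\int[mu]_(x in Dm p) (V x)%:E) <= fine (\int[mu]_(x in Dm p) (V (x + (q - p)))%:E)).
have mV' : measurable_fun setT (fun x : R => V (x + (q - p))).
  by apply: nondecreasing_measurable => // s t st; apply: ndV; rewrite lerD2r.
have i1 := @integrable_bd V p mV (@bd_norm V hV).
have i2 := @integrable_bd _ p mV' (@bd_norm (fun x => V (x + (q - p))) (fun x => hV _)).
apply: fine_le; [exact: (integrable_fin_num (mDm p) i1)|exact: (integrable_fin_num (mDm p) i2)|].
apply: (le_integral (mDm p) i1 i2) => x _; rewrite lee_fin; apply: ndV.
by rewrite lerDl subr_ge0.
Qed.

Lemma deriv_cont (f f' : R -> R) (A : set R) : deriv_on f f' A ->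
  {within A, continuous f}.
Proof.
move=> hd; apply/subspace_continuousP => x Ax.
have /cvgrPdist_lt /(_ 1 ltr01) hq1 := hd x Ax.
apply/cvgrPdist_lt => e e0.
set M := `|f' x| + 1.
have M0 : 0 < M by rewrite ltr_wpDl.
have eM : 0 < e / M by rewrite divr_gt0.
have hb := nbhsx_ballx x (e / M) eM.
rewrite near_withinE.
move: hq1; rewrite near_withinE /dnbhs near_withinE => hq1.
move: hb hq1; apply: filterS2 => t hb hq At.
rewrite /from_subspace /=.
have [->|tx] := eqVneq t x; first by rewrite subrr normr0.
have {}hq := hq tx At.
rewrite -ball_normE /ball_ /= in hb.
have tx0 : t - x != 0 by rewrite subr_eq0.
have -> : f x - f t = - (((f t - f x) / (t - x)) * (t - x)) by rewrite divfK // opprB.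
rewrite normrN normrM.
have hqM : `|(f t - f x) / (t - x)| <= M.
  set q := (f t - f x) / (t - x) in hq *.
  have h1 : `|q| <= `|q - f' x| + `|f' x|.
    by rewrite -{1}(subrK (f' x) q) ler_normD.
  apply: (le_trans h1); rewrite /M addrC lerD2l distrC; exact: ltW.
apply: (le_lt_trans (ler_wpM2r (normr_ge0 _) hqM)).
have : M * `|t - x| < M * (e / M) by rewrite ltr_pM2l // distrC.
move/lt_le_trans; apply.
by rewrite mulrC divfK ?gt_eqF.
Qed.

Lemma I11E : @I11 R = [set` `[-1, 1]%R].
Proof. by rewrite /I11 set_itvcc. Qed.

Lemma mI11 : measurable (@I11 R).
Proof. exact: mitv. Qed.

Lemma Phi_bound (Phi dPhi : R -> R) : deriv_on Phi dPhi (@I11 R) ->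
  exists M, forall x, I11 x -> `|Phi x| <= M.
Proof.
move=> hd; have c := @deriv_cont Phi dPhi _ hd; rewrite I11E in c.
have m11 : (-1 : R) <= 1 by lra.
have [c1 _ h1] := EVT_max m11 c.
have [c2 _ h2] := EVT_min m11 c.
exists (`|Phi c1| + `|Phi c2|) => x Ix.
have xin : x \in `[-1, 1]%R by rewrite in_itv.
have a1 := h1 x xin; have a2 := h2 x xin.
have b1 := ler_norm (Phi c1); have b2 := ler_norm (- Phi c2).
rewrite normrN in b2.
have n1 := normr_ge0 (Phi c1); have n2 := normr_ge0 (Phi c2).
rewrite ler_norml; apply/andP; split; lra.
Qed.

Lemma mPhiA (Phi dPhi : R -> R) (B : R -> R) : deriv_on Phi dPhi (@I11 R) ->
  {homo B : x y / x <= y} -> (forall x, -1 <= B x <= 1) ->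
  measurable_fun setT (fun x => Phi (B x)).
Proof.
move=> hd ndB hB.
apply: (@measurable_comp _ _ _ _ _ _ (@I11 R)).
- exact: mI11.
- by move=> _ [x _ <-]; exact: hB.
- exact: subspace_continuous_measurable_fun mI11 (@deriv_cont Phi dPhi _ hd).
- exact: nondecreasing_measurable.
Qed.

Lemma sg_nd : {homo (@Wsh R) : x y / x <= y}.
Proof.
move=> x y xy; rewrite /Wsh.
by case: sgrP => hx; case: sgrP => hy //; lra.
Qed.

Lemma sg_bd x : -1 <= @Wsh R x <= 1.
Proof. by rewrite /Wsh; case: sgrP => _; apply/andP; split; lra. Qed.

Lemma msg : measurable_fun setT (@Wsh R).
Proof. apply: nondecreasing_measurable => //; exact: sg_nd. Qed.

Lemma Asg_gt phi : 1 < phi -> Aop (@Wsh R) phi = 1.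
Proof.
move=> h1; change (fine (\int[mu]_(x in Dm phi) (Wsh x)%:E)%E = 1).
rewrite (eq_integral (fun _ => 1%:E)); first by rewrite int_cstD.
move=> x; rewrite inE /= => /andP[h _]; rewrite /Wsh gtr0_sg //; lra.
Qed.

Lemma Asg_lt phi : phi < -1 -> Aop (@Wsh R) phi = -1.
Proof.
move=> h1; change (fine (\int[mu]_(x in Dm phi) (Wsh x)%:E)%E = -1).
rewrite (eq_integral (fun _ => (-1)%:E)); first by rewrite int_cstD.
move=> x; rewrite inE /= => /andP[_ h]; rewrite /Wsh ltr0_sg //; lra.
Qed.

Lemma Asg_nd : {homo Aop (@Wsh R) : x y / x <= y}.
Proof. exact: (@Aop_nd (@Wsh R) sg_nd sg_bd). Qed.

Lemma Asg_bd x : -1 <= Aop (@Wsh R) x <= 1.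
Proof. exact: (@Aop_bound (@Wsh R) x msg sg_bd). Qed.

Lemma sq_bd (s : R) : -1 <= s <= 1 -> 0 <= s ^+ 2 <= 1.
Proof. by case/andP => h1 h2; apply/andP; split; nra. Qed.

Lemma muI11 : mu (@I11 R) = 2%:E.
Proof.
rewrite I11E lebesgue_measure_itv /= lte_fin.
have -> : (-1 : R) < 1 by lra.
by congr (_%:E); lra.
Qed.

Lemma k_int (Phi dPhi : R -> R) : deriv_on Phi dPhi (@I11 R) -> Phi (-1) = Phi 1 ->
  mu.-integrable setT (EFin \o (fun x => (2^-1 - Phi 1) -
     (2^-1 * @Wsh R x ^+ 2 - Phi (Aop (@Wsh R) x)))).
Proof.
move=> hd hsym.
have [M hM] := @Phi_bound Phi dPhi hd.
have I1 : I11 (1 : R) by rewrite /I11 /=; apply/andP; split; lra.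
have M0 : 0 <= M by apply: le_trans (hM _ I1).
set k := (fun x => _).
have mk : measurable_fun setT k.
  apply: measurable_funB; first exact: measurable_cst.
  apply: measurable_funB.
    apply: measurable_funM; first exact: measurable_cst.
    exact: measurable_funX msg.
  exact: (@mPhiA Phi dPhi _ hd Asg_nd Asg_bd).
apply/integrableP; split; first exact/measurable_EFinP.
set K := 1 + 2 * M.
apply: (@le_lt_trans _ _ (\int[mu]_x (((fun=> K%:E) \_ (@I11 R)) x))%E).
  apply: ge0_le_integral => //.
  - apply/measurable_EFinP; exact: measurableT_comp.
  - by apply/(measurable_restrictT _ mI11); exact: measurable_cst.
  move=> x _; rewrite patchE; case: ifPn => [/set_mem Ix|/negP Ix].
    rewrite /= lee_fin /k ler_norml.
    have := hM _ Ix; have := hM _ I1; rewrite !ler_norml => /andP[a1 a2] /andP[b1 b2].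
    have Ix' : I11 (Aop (@Wsh R) x) by exact: Asg_bd.
    have := hM _ Ix'; rewrite ler_norml => /andP[c1 c2].
    have /andP[d1 d2] := @sq_bd (@Wsh R x) (sg_bd x).
    by rewrite /K; apply/andP; split; lra.
  have [h|h] : x < -1 \/ 1 < x.
    rewrite /I11 /= in Ix; case: (ltrP x (-1)) => h1; first by left.
    right; rewrite ltNge; apply/negP => h2; apply: Ix; rewrite inE /=; apply/andP; split => //.
  - rewrite /k /= Asg_lt // /Wsh ltr0_sg ?(lt_trans h) // -hsym sqrrN expr1n.
    by rewrite mulr1 subrr normr0.
  - rewrite /k /= Asg_gt // /Wsh gtr0_sg ?(lt_trans _ h) // expr1n.
    by rewrite mulr1 subrr normr0.
rewrite -integral_mkcond.
have := @integral_cst _ RR R mu (@I11 R) mI11 K%:E.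
move=> ->.
have -> : (K%:E * mu (@I11 R))%E = (K%:E * 2%:E)%E.
  by congr (_ * _)%E; exact: muI11.
by rewrite -EFinM ltry.
Qed.

Lemma main (Phi dPhi : R -> R) (hPhi1 : deriv_on Phi dPhi (@I11 R))
  (hsym : Phi (-1) = Phi 1) (W : R -> R) (hW : in_C W) (phibar : R) :
  L_Phi Phi (fun phi => W (phi + phibar)) = L_Phi Phi W.
Proof.
case: hW => [[mW _] [V [ae [ndV [cp cn]]]]].
have hVb := @V_bounds V ndV cp cn.
have mV : measurable_fun setT V by apply: nondecreasing_measurable.
have AWV : forall phi, Aop W phi = Aop V phi.
  move=> phi.
  change (fine (\int[mu]_(x in Dm phi) (W x)%:E)%E =
          fine (\int[mu]_(x in Dm phi) (V x)%:E)%E).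
  congr fine; apply: ae_eq_integral.
  - exact: mDm.
  - apply/measurable_EFinP; exact: measurable_funS mW.
  - apply/measurable_EFinP; exact: measurable_funS mV.
  - apply: (@filterS _ _ (ae_filter_ringOfSetsType mu) _ _ _ ae) => x h _; by rewrite h.
set c := 2^-1 - Phi 1.
pose u := fun x => 2^-1 * W x ^+ 2 - Phi (Aop V x) - c.
pose k := fun x => c - (2^-1 * @Wsh R x ^+ 2 - Phi (Aop (@Wsh R) x)).
have mu_ : measurable_fun setT u.
  apply: measurable_funB; last exact: measurable_cst.
  apply: measurable_funB.
    apply: measurable_funM; first exact: measurable_cst.
    exact: measurable_funX mW.
  exact: (@mPhiA Phi dPhi _ hPhi1 (@Aop_nd V ndV hVb) (fun x => @Aop_bound V x mV hVb)).
have ik : mu.-integrable setT (EFin \o k) := @k_int Phi dPhi hPhi1 hsym.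
have mua : measurable_fun setT (fun x : R => u (x + phibar)).
  exact: measurableT_comp mu_ (mshift phibar).
have E1 : L_Phi Phi W = (\int[mu]_x ((u x + k x)%R)%:E)%E.
  rewrite /L_Phi; apply: eq_integral => x _; congr (_%:E).
  by rewrite /u /k AWV; ring.
have E2 : L_Phi Phi (fun phi => W (phi + phibar)) =
    (\int[mu]_x ((u (x + phibar) + k x)%R)%:E)%E.
  rewrite /L_Phi; apply: eq_integral => x _; congr (_%:E).
  by rewrite /u /k Aop_shift // AWV; ring.
rewrite E1 E2 (@integralD_gen _ RR R mu _ k mua ik) (@integralD_gen _ RR R mu _ k mu_ ik).
congr (_ + _)%E.
exact: (@integral_shift phibar (fun x => (u x)%:E) (measurableT_comp _ mu_)).
Qed.
End S.

Theorem corollary3p10 (R : realType) (Phi dPhi ddPhi : R -> R)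
  (hPhi1 : deriv_on Phi dPhi (@I11 R))
  (hPhi2 : deriv_on dPhi ddPhi (@I11 R))
  (hPhi2c : {within @I11 R, continuous ddPhi})
  (hdm : dPhi (-1) = -1) (hdp : dPhi 1 = 1)
  (hconv : forall x, I11 x -> 0 <= ddPhi x)
  (hsym : Phi (-1) = Phi 1)
  (hddm : ddPhi (-1) < 1) (hddp : ddPhi 1 < 1)
  (hg : forall w : R, -1 < w < 1 -> 0 < g_Phi dPhi w)
  (W : R -> R) (hW : in_C W) (phibar : R) :
  L_Phi Phi (fun phi => W (phi + phibar)) = L_Phi Phi W.
Proof. exact: (@main R Phi dPhi hPhi1 hsym W hW phibar). Qed.
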